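(* Let $1\le p<\infty$, let $X$ be an infinite dimensional Banach space and let $(X_n)_{n=1}^\infty$ be a sequence of Banach spaces over $\mathbb{K}$ having a subsequence that contains isomorphs of $X$ uniformly. Then $\left(\sum_n X_n\right)_p^+\setminus\left(\sum_n X_n\right)_p$ is $\dim X$-spaceable in the Fréchet space $\left(\sum_n X_n\right)_p^+$.
   Context: For $0<q<\infty$, $\left(\sum_n X_n\right)_q$ is the space of all sequences $(x_n)_{n=1}^\infty$ with $x_n\in X_n$ and $\|(x_n)\|_q:=\left(\sum_{n=1}^\infty\|x_n\|_{X_n}^q\right)^{1/q}<\infty$. For $1\le p<\infty$, $\left(\sum_n X_n\right)_p^+:=\bigcap_{q>p}\left(\sum_n X_n\right)_q$, endowed with the locally convex topology generated by the family of norms $\|\cdot\|_q$, $q>p$ (equivalently by $\|\cdot\|_{p_k}$, $k\in\mathbb{N}$, for any decreasing sequence $p_k\to p$); this is a Fréchet space. A family $(Y_i)_{i\in I}$ of Banach spaces contains isomorphs of $X$ uniformly if there exist $\delta>0$ and isomorphic embeddings $R_i\colon X\to Y_i$ with $\max\{\|R_i\|,\|R_i^{-1}\|\}\le\delta$ for every $i\in I$. For a cardinal $\mu$ and a subset $A$ of a topological vector space $E$, $A$ is called $\mu$-spaceable if $A\cup\{0\}$ contains a closed linear subspace of $E$ of algebraic dimension $\mu$. $\dim X$ is the algebraic dimension of $X$. *)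

(* Defs.v *)
From Stdlib Require Import Reals List.
Unset Implicit Arguments.
Open Scope R_scope.

(** Scalar fields: K is either R or C (C modelled as R*R). *)
Record Scalars := mkScalars {
  sc :> Type; s0 : sc; s1 : sc;
  sadd : sc -> sc -> sc; smul : sc -> sc -> sc; sopp : sc -> sc;
  sabs : sc -> R }.

Definition RK : Scalars := @mkScalars R 0 1 Rplus Rmult Ropp Rabs.

Definition Cmul (z w : R * R) : R * R :=
  (fst z * fst w - snd z * snd w, fst z * snd w + snd z * fst w).

Definition CK : Scalars :=
  @mkScalars (R * R) (0, 0) (1, 0)
    (fun z w => (fst z + fst w, snd z + snd w)) Cmul
    (fun z => (- fst z, - snd z))
    (fun z => sqrt (fst z ^ 2 + snd z ^ 2)).

Record VSops (K : Scalars) := mkVSops {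
  vc :> Type; v0 : vc; vadd : vc -> vc -> vc; vopp : vc -> vc;
  vscal : sc K -> vc -> vc }.
Arguments vc {K} _.
Arguments v0 {K} v.
Arguments vadd {K v} _ _.
Arguments vopp {K v} _.
Arguments vscal {K v} _ _.

Fixpoint lincomb {K : Scalars} {V : VSops K} (l : list (sc K * vc V)) : vc V :=
  match l with
  | nil => v0 V
  | (a, x) :: t => vadd (vscal a x) (lincomb t)
  end.

Definition in_span {K : Scalars} {V : VSops K} (B : vc V -> Prop) (x : vc V) :=
  exists l : list (sc K * vc V), Forall (fun ax => B (snd ax)) l /\ x = lincomb l.

Definition lin_indep {K : Scalars} {V : VSops K} (B : vc V -> Prop) :=
  forall l : list (sc K * vc V), NoDup (map snd l) ->
    Forall (fun ax => B (snd ax)) l -> lincomb l = v0 V ->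
    Forall (fun ax => fst ax = s0 K) l.

Definition hamel_basis_of {K : Scalars} (V : VSops K) (S : vc V -> Prop) (B : vc V -> Prop) :=
  (forall x, B x -> S x) /\ lin_indep B /\ (forall x, S x -> in_span B x).

Record NormedSpace (K : Scalars) := mkNormedSpace {
  nsv :> VSops K;
  nnorm : vc nsv -> R;
  ns_add_assoc : forall x y z : vc nsv, vadd x (vadd y z) = vadd (vadd x y) z;
  ns_add_comm : forall x y : vc nsv, vadd x y = vadd y x;
  ns_add_0 : forall x : vc nsv, vadd x (v0 nsv) = x;
  ns_add_opp : forall x : vc nsv, vadd x (vopp x) = v0 nsv;
  ns_scal_assoc : forall (a b : sc K) (x : vc nsv), vscal a (vscal b x) = vscal (smul K a b) x;
  ns_scal_1 : forall x : vc nsv, vscal (s1 K) x = x;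
  ns_scal_distr_v : forall (a : sc K) (x y : vc nsv), vscal a (vadd x y) = vadd (vscal a x) (vscal a y);
  ns_scal_distr_s : forall (a b : sc K) (x : vc nsv), vscal (sadd K a b) x = vadd (vscal a x) (vscal b x);
  ns_norm_nonneg : forall x, 0 <= nnorm x;
  ns_norm_zero : forall x, nnorm x = 0 -> x = v0 nsv;
  ns_norm_scal : forall a x, nnorm (vscal a x) = sabs K a * nnorm x;
  ns_norm_triangle : forall x y, nnorm (vadd x y) <= nnorm x + nnorm y }.
Arguments nnorm {K n} _.
Arguments nsv {K} _.

Definition vsub {K : Scalars} {V : VSops K} (x y : vc V) : vc V := vadd x (vopp y).

Definition complete {K : Scalars} (X : NormedSpace K) :=
  forall u : nat -> vc X,
    (forall eps, eps > 0 -> exists N, forall m n, (m >= N)%nat -> (n >= N)%nat ->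
        nnorm (vsub (u m) (u n)) < eps) ->
    exists l : vc X, forall eps, eps > 0 -> exists N, forall n, (n >= N)%nat ->
        nnorm (vsub (u n) l) < eps.

Definition infinite_dim {K : Scalars} (X : NormedSpace K) :=
  forall l : list (vc X), ~ (forall x, in_span (fun y => In y l) x).

Definition linear_map {K : Scalars} {X Y : NormedSpace K} (T : vc X -> vc Y) :=
  (forall x y, T (vadd x y) = vadd (T x) (T y)) /\
  (forall a x, T (vscal a x) = vscal a (T x)).

Definition contains_isomorphs_uniformly {K : Scalars} (X : NormedSpace K)
    (Y : nat -> NormedSpace K) :=
  exists delta, 0 < delta /\
    forall k, exists T : vc X -> vc (Y k), linear_map T /\
      forall x, nnorm (T x) <= delta * nnorm x /\ nnorm x <= delta * nnorm (T x).

Definition seqVS {K : Scalars} (Xs : nat -> NormedSpace K) : VSops K :=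
  @mkVSops K (forall n, vc (Xs n)) (fun n => v0 (Xs n))
    (fun x y n => vadd (x n) (y n)) (fun x n => vopp (x n))
    (fun a x n => vscal a (x n)).

(** a^q for a >= 0 (with 0^q = 0). *)
Definition rpow (a q : R) : R := if Rle_dec a 0 then 0 else Rpower a q.

Definition summable (f : nat -> R) := exists l, infinite_sum f l.

Definition in_lq {K : Scalars} (Xs : nat -> NormedSpace K) (q : R) (x : vc (seqVS Xs)) :=
  summable (fun n => rpow (nnorm (x n)) q).

Definition in_lp_plus {K : Scalars} (Xs : nat -> NormedSpace K) (p : R) (x : vc (seqVS Xs)) :=
  forall q, p < q -> in_lq Xs q x.

(** Convergence in the Fréchet topology of (sum X_n)_p^+ : ||u_k - x||_q -> 0 for all q > p *)
Definition lp_plus_conv {K : Scalars} (Xs : nat -> NormedSpace K) (p : R)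
    (u : nat -> vc (seqVS Xs)) (x : vc (seqVS Xs)) :=
  forall q, p < q -> forall eps, eps > 0 -> exists N, forall k, (k >= N)%nat ->
    exists s, infinite_sum (fun n => rpow (nnorm (vsub (u k n) (x n))) q) s /\ s < eps.

(** W is a closed linear subspace of the Fréchet space (sum X_n)_p^+
    (closedness = sequential closedness, equivalent since the space is metrizable). *)
Definition closed_subspace_lp_plus {K : Scalars} (Xs : nat -> NormedSpace K) (p : R)
    (W : vc (seqVS Xs) -> Prop) :=
  (forall x, W x -> in_lp_plus Xs p x) /\
  W (v0 (seqVS Xs)) /\
  (forall x y, W x -> W y -> W (vadd x y)) /\
  (forall (a : sc K) x, W x -> W (vscal a x)) /\
  (forall (u : nat -> vc (seqVS Xs)) x, (forall k, W (u k)) -> in_lp_plus Xs p x ->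
     lp_plus_conv Xs p u x -> W x).

Definition bijective_map {A B : Type} (f : A -> B) :=
  (forall a1 a2, f a1 = f a2 -> a1 = a2) /\ (forall b, exists a, f a = b).

(* Main.v *)
Require Import Defs.
From Stdlib Require Import Reals List Lra Lia Classical ClassicalEpsilon FunctionalExtensionality ProofIrrelevance.
From mathcomp Require classical_sets.
Open Scope R_scope.

Record KP (K : Scalars) := mkKP {
  kp_00 : sadd K (s0 K) (s0 K) = s0 K;
  kp_opp : forall c, sadd K c (sopp K c) = s0 K;
  kp_inv : forall a, a <> s0 K -> exists b, smul K b a = s1 K;
  kp_comm : forall a b, smul K a b = smul K b a;
  kp_abs0 : sabs K (s0 K) = 0;
  kp_absm1 : sabs K (sopp K (s1 K)) = 1;
  kp_emb : R -> sc K;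
  kp_emb_abs : forall r, sabs K (kp_emb r) = Rabs r }.

Arguments kp_00 {K} k. Arguments kp_opp {K} k c. Arguments kp_inv {K} k a _.
Arguments kp_comm {K} k a b. Arguments kp_abs0 {K} k. Arguments kp_absm1 {K} k.
Arguments kp_emb {K} k r. Arguments kp_emb_abs {K} k r.
Arguments ns_add_assoc {K n} x y z. Arguments ns_add_comm {K n} x y.
Arguments ns_add_0 {K n} x. Arguments ns_add_opp {K n} x.
Arguments ns_scal_assoc {K n} a b x. Arguments ns_scal_1 {K n} x.
Arguments ns_scal_distr_v {K n} a x y. Arguments ns_scal_distr_s {K n} a b x.
Arguments ns_norm_nonneg {K n} x. Arguments ns_norm_zero {K n} x _.
Arguments ns_norm_scal {K n} a x. Arguments ns_norm_triangle {K n} x y.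

Lemma KP_R : KP RK.
Proof.
unshelve eapply (@mkKP RK _ _ _ _ _ _ (fun r => r) _); simpl; intros.
- ring.
- ring.
- exists (/ a). field. exact H.
- ring.
- apply Rabs_R0.
- rewrite Rabs_Ropp. apply Rabs_R1.
- reflexivity.
Qed.

Lemma KP_C : KP CK.
Proof.
unshelve eapply (@mkKP CK _ _ _ _ _ _ (fun r => (r, 0)) _); simpl; intros.
- f_equal; ring.
- f_equal; ring.
- destruct a as [x y]. simpl in *.
  assert (Hn : x*x + y*y <> 0).
  { intro Hz. apply H. assert (x = 0) by nra. assert (y = 0) by nra. subst. reflexivity. }
  exists (x / (x*x+y*y), - y / (x*x+y*y)). unfold Cmul; simpl. f_equal; field; exact Hn.
- unfold Cmul. f_equal; ring.
- match goal with |- sqrt ?e = _ => replace e with 0 by ring end. apply sqrt_0.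
- match goal with |- sqrt ?e = _ => replace e with 1 by ring end. apply sqrt_1.
- match goal with |- sqrt ?e = _ => replace e with (Rsqr r) by (unfold Rsqr; ring) end. apply sqrt_Rsqr_abs.
Qed.

Lemma KP_of K : K = RK \/ K = CK -> inhabited (KP K).
Proof. intros [-> | ->]; constructor; [exact KP_R | exact KP_C]. Qed.

Lemma v_add0l {K} (X : NormedSpace K) (x : vc X) : vadd (v0 X) x = x.
Proof. rewrite ns_add_comm. apply ns_add_0. Qed.

Lemma v_cancel {K} (X : NormedSpace K) (x y z : vc X) : vadd x y = vadd x z -> y = z.
Proof.
intro H.
assert (E : forall w, w = vadd (vopp x) (vadd x w)).
{ intro w. rewrite ns_add_assoc, (ns_add_comm (vopp x)), ns_add_opp, v_add0l. reflexivity. }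
rewrite (E y), (E z), H. reflexivity.
Qed.

Lemma v_opp_uniq {K} (X : NormedSpace K) (x y : vc X) : vadd x y = v0 X -> y = vopp x.
Proof. intro H. apply (v_cancel X x). rewrite H, ns_add_opp. reflexivity. Qed.

Lemma v_self0 {K} (X : NormedSpace K) (x : vc X) : vadd x x = x -> x = v0 X.
Proof. intro H. apply (v_cancel X x). rewrite H, ns_add_0. reflexivity. Qed.

Lemma v_scal0 {K} (kp : KP K) (X : NormedSpace K) (x : vc X) : vscal (s0 K) x = v0 X.
Proof. apply v_self0. rewrite <- ns_scal_distr_s, (kp_00 kp). reflexivity. Qed.

Lemma v_scalv0 {K} (X : NormedSpace K) (a : sc K) : vscal a (v0 X) = v0 X.
Proof. apply v_self0. rewrite <- ns_scal_distr_v, ns_add_0. reflexivity. Qed.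

Lemma v_scal_opp {K} (kp : KP K) (X : NormedSpace K) (a : sc K) (x : vc X) :
  vscal (sopp K a) x = vopp (vscal a x).
Proof. apply v_opp_uniq. rewrite <- ns_scal_distr_s, (kp_opp kp), (v_scal0 kp). reflexivity. Qed.

Lemma v_opp_scal {K} (kp : KP K) (X : NormedSpace K) (x : vc X) :
  vopp x = vscal (sopp K (s1 K)) x.
Proof. rewrite (v_scal_opp kp), ns_scal_1. reflexivity. Qed.

Lemma v_opp_opp {K} (X : NormedSpace K) (x : vc X) : vopp (vopp x) = x.
Proof. symmetry. apply v_opp_uniq. rewrite ns_add_comm. apply ns_add_opp. Qed.

Lemma v_sub_eq0 {K} (X : NormedSpace K) (x y : vc X) : vsub x y = v0 X -> x = y.
Proof.
unfold vsub. intro H. apply v_opp_uniq in H.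
rewrite <- (v_opp_opp X x), <- H, v_opp_opp. reflexivity.
Qed.

Lemma v_norm0 {K} (kp : KP K) (X : NormedSpace K) : nnorm (v0 X) = 0.
Proof.
rewrite <- (v_scal0 kp X (v0 X)), ns_norm_scal, (kp_abs0 kp). ring.
Qed.

Lemma v_norm_opp {K} (kp : KP K) (X : NormedSpace K) (x : vc X) : nnorm (vopp x) = nnorm x.
Proof. rewrite (v_opp_scal kp), ns_norm_scal, (kp_absm1 kp). ring. Qed.

Lemma v_opp_add {K} (X : NormedSpace K) (x y : vc X) : vopp (vadd x y) = vadd (vopp x) (vopp y).
Proof.
symmetry. apply v_opp_uniq.
rewrite <- ns_add_assoc.
rewrite (ns_add_assoc y (vopp x) (vopp y)), (ns_add_comm y (vopp x)), <- (ns_add_assoc (vopp x) y (vopp y)), ns_add_opp, ns_add_0, ns_add_opp. reflexivity.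
Qed.


Lemma v_sub_sym {K} (kp : KP K) (X : NormedSpace K) (x y : vc X) : nnorm (vsub x y) = nnorm (vsub y x).
Proof.
rewrite <- (v_norm_opp kp X (vsub y x)). unfold vsub.
rewrite v_opp_add, v_opp_opp, ns_add_comm. reflexivity.
Qed.

Lemma v_sub_tri {K} (X : NormedSpace K) (x y z : vc X) :
  nnorm (vsub x z) <= nnorm (vsub x y) + nnorm (vsub y z).
Proof.
replace (vsub x z) with (vadd (vsub x y) (vsub y z)). apply ns_norm_triangle.
unfold vsub. rewrite <- ns_add_assoc, (ns_add_assoc (vopp y)).
rewrite (ns_add_comm (vopp y) y), ns_add_opp, v_add0l. reflexivity.
Qed.

Lemma lincomb_app {K} (X : NormedSpace K) (l1 l2 : list (sc K * vc X)) :
  lincomb (l1 ++ l2) = vadd (lincomb l1) (lincomb l2).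
Proof.
induction l1 as [|[a x] t IH]; simpl.
- rewrite v_add0l. reflexivity.
- rewrite IH, ns_add_assoc. reflexivity.
Qed.

Lemma lincomb_mid {K} (X : NormedSpace K) l1 (a : sc K) (x : vc X) l2 :
  lincomb (l1 ++ (a, x) :: l2) = vadd (vscal a x) (lincomb (l1 ++ l2)).
Proof.
rewrite !lincomb_app. simpl.
rewrite !ns_add_assoc, (ns_add_comm (lincomb l1)). reflexivity.
Qed.

Definition scale_list {K} {X : NormedSpace K} (b : sc K) (l : list (sc K * vc X)) :=
  map (fun ax => (smul K b (fst ax), snd ax)) l.

Lemma lincomb_scale {K} (X : NormedSpace K) b (l : list (sc K * vc X)) :
  lincomb (scale_list b l) = vscal b (lincomb l).
Proof.
induction l as [|[a x] t IH]; simpl.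
- rewrite v_scalv0. reflexivity.
- rewrite IH, ns_scal_distr_v, ns_scal_assoc. reflexivity.
Qed.

Lemma in_split_snd {A B} (x : B) (l : list (A * B)) :
  In x (map snd l) -> exists l1 a l2, l = l1 ++ (a, x) :: l2.
Proof.
intro H. apply in_map_iff in H. destruct H as [[a y] [Hy Hin]]. simpl in Hy. subst y.
apply in_split in Hin. destruct Hin as [l1 [l2 ->]]. eauto.
Qed.

Lemma indep_extend {K} (kp : KP K) (X : NormedSpace K) (B : vc X -> Prop) (x : vc X) :
  lin_indep B -> ~ in_span B x -> lin_indep (fun y => B y \/ y = x).
Proof.
intros HB Hx l Hnd Hf H0.
destruct (classic (In x (map snd l))) as [Hin | Hnin].
- destruct (in_split_snd x l Hin) as [l1 [a [l2 ->]]].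
  rewrite map_app in Hnd. simpl in Hnd.
  assert (Hnd2 := NoDup_remove_1 _ _ _ Hnd).
  assert (Hni := NoDup_remove_2 _ _ _ Hnd).
  rewrite <- map_app in Hnd2, Hni.
  assert (HfB : Forall (fun ax => B (snd ax)) (l1 ++ l2)).
  { apply Forall_forall. intros [c y] Hy. simpl.
    assert (Hy' : In (c, y) (l1 ++ (a, x) :: l2)).
    { apply in_app_or in Hy. apply in_or_app. destruct Hy; [left | right; right]; auto. }
    rewrite Forall_forall in Hf. destruct (Hf _ Hy') as [Hb | Heq]; [exact Hb|].
    simpl in Heq. subst y. exfalso. apply Hni. apply in_map_iff. exists (c, x). auto. }
  rewrite lincomb_mid in H0.
  destruct (classic (a = s0 K)) as [Ha | Ha].
  + subst a. rewrite (v_scal0 kp), v_add0l in H0.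
    pose proof (HB _ Hnd2 HfB H0) as Hz.
    apply Forall_app in Hz. destruct Hz as [Hz1 Hz2].
    apply Forall_app. split; [exact Hz1 | constructor; [reflexivity | exact Hz2]].
  + exfalso. apply Hx. destruct (kp_inv kp a Ha) as [b Hb].
    assert (E : vadd x (vscal b (lincomb (l1 ++ l2))) = v0 X).
    { rewrite <- (v_scalv0 X b), <- H0, ns_scal_distr_v, ns_scal_assoc, Hb, ns_scal_1.
      reflexivity. }
    apply v_opp_uniq in E.
    assert (E2 : x = lincomb (scale_list (sopp K b) (l1 ++ l2))).
    { rewrite lincomb_scale, (v_scal_opp kp), E, v_opp_opp. reflexivity. }
    exists (scale_list (sopp K b) (l1 ++ l2)). split; [|exact E2].
    unfold scale_list. apply Forall_map. simpl. exact HfB.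
- apply HB; auto.
  apply Forall_forall. intros [c y] Hy. rewrite Forall_forall in Hf.
  destruct (Hf _ Hy) as [Hb | Heq]; [exact Hb|].
  simpl in Heq. subst y. exfalso. apply Hnin. apply in_map_iff. exists (c, x). auto.
Qed.

Lemma chain_list {A T : Type} (F : (T -> Prop) -> Prop)
  (Htot : forall S1 S2, F S1 -> F S2 -> (forall t, S1 t -> S2 t) \/ (forall t, S2 t -> S1 t))
  (l : list (A * T)) :
  Forall (fun ax => exists S, F S /\ S (snd ax)) l ->
  l = nil \/ exists S, F S /\ Forall (fun ax => S (snd ax)) l.
Proof.
induction l as [|ax t IH]; intro H; [left; reflexivity|right].
inversion H as [|? ? [S [HS HSa]] Ht]; subst.
destruct (IH Ht) as [-> | [S' [HS' Hf]]].
- exists S. split; [exact HS|]. constructor; [exact HSa | constructor].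
- destruct (Htot S S' HS HS') as [Hs | Hs].
  + exists S'. split; [exact HS'|]. constructor; [apply Hs; exact HSa | exact Hf].
  + exists S. split; [exact HS|]. constructor; [exact HSa|].
    eapply Forall_impl; [|exact Hf]. intros a Ha. apply Hs. exact Ha.
Qed.

Lemma hamel_exists {K} (kp : KP K) (X : NormedSpace K) :
  exists B : vc X -> Prop, hamel_basis_of X (fun _ => True) B.
Proof.
destruct (@classical_sets.Zorn_bigcup (vc X) (fun B => lin_indep B)) as [B [HB Hmax]].
- intros F HF Htot l Hnd Hf H0.
  destruct (chain_list F Htot l) as [-> | [S [HS Hf']]].
  + eapply Forall_impl; [|exact Hf]. intros [a x] Hx. simpl in *.
    destruct Hx as [S HS Hx]. exists S. split; assumption.
  + constructor.
  + exact (HF S HS l Hnd Hf' H0).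
- exists B. split; [intros; exact I|]. split; [exact HB|].
  intros x _. apply NNPP. intro Hx.
  apply (Hmax (fun y => B y \/ y = x)).
  + split.
    * intros t Ht. left. exact Ht.
    * intro Hsub. apply Hx. exists ((s1 K, x) :: nil). split.
      { constructor; [|constructor]. simpl. exact (Hsub x (or_intror eq_refl)). }
      simpl. rewrite ns_add_0, ns_scal_1. reflexivity.
  + exact (indep_extend kp X B x HB Hx).
Qed.

Lemma sum_nonneg (a : nat -> R) : (forall n, 0 <= a n) -> forall N, 0 <= sum_f_R0 a N.
Proof. intros Ha N; induction N; simpl; [apply Ha|]. specialize (Ha (S N)). lra. Qed.

Lemma sum_growing (a : nat -> R) : (forall n, 0 <= a n) -> Un_growing (sum_f_R0 a).
Proof. intros Ha n. simpl. specialize (Ha (S n)). lra. Qed.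

Lemma summ_of_bound (a : nat -> R) : (forall n, 0 <= a n) ->
  (exists C, forall N, sum_f_R0 a N <= C) -> summable a.
Proof.
intros Ha [C HC]. destruct (Un_cv_crit (sum_f_R0 a) (sum_growing a Ha)) as [l Hl].
- exists C. intros x [i ->]. apply HC.
- exists l. exact Hl.
Qed.

Lemma bound_of_summ (a : nat -> R) : (forall n, 0 <= a n) -> summable a ->
  exists C, forall N, sum_f_R0 a N <= C.
Proof.
intros Ha [l Hl]. exists l. intro N. apply (growing_ineq (sum_f_R0 a) l (sum_growing a Ha) Hl).
Qed.

Lemma term_le_sum (a : nat -> R) s : (forall n, 0 <= a n) -> infinite_sum a s -> forall n, a n <= s.
Proof.
intros Ha Hs n. apply Rle_trans with (sum_f_R0 a n).
- destruct n; simpl; [lra|]. pose proof (sum_nonneg a Ha n). lra.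
- apply (growing_ineq (sum_f_R0 a) s (sum_growing a Ha) Hs).
Qed.

Lemma summ_comp (a b : nat -> R) M : (forall n, 0 <= a n) -> (forall n, 0 <= b n) -> 0 <= M ->
  (forall n, a n <= M * b n) -> summable b -> summable a.
Proof.
intros Ha Hb HM Hab Hsb. destruct (bound_of_summ b Hb Hsb) as [C HC].
apply summ_of_bound; auto. exists (M * C). intro N.
apply Rle_trans with (M * sum_f_R0 b N).
- induction N; simpl; [apply Hab|]. specialize (Hab (S N)). lra.
- apply Rmult_le_compat_l; auto.
Qed.

Lemma ln_le_sub1 y : 0 < y -> ln y <= y - 1.
Proof. intro Hy. pose proof (exp_ineq1_le (ln y)). rewrite exp_ln in H by exact Hy. lra. Qed.

Lemma ln_gap m : 1 <= m -> / (m + 1) <= ln (m + 1) - ln m.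
Proof.
intro Hm. assert (H := ln_le_sub1 (m / (m + 1))).
assert (Hp : 0 < m / (m + 1)) by (apply Rdiv_lt_0_compat; lra).
specialize (H Hp). unfold Rdiv in H. rewrite ln_mult, ln_Rinv in H by (try apply Rinv_0_lt_compat; lra).
replace (m * / (m + 1) - 1) with (- / (m + 1)) in H by (field; lra). lra.
Qed.

Lemma ln_gap2 m : 1 <= m -> ln (m + 1) - ln m <= / m.
Proof.
intro Hm. assert (H := ln_le_sub1 ((m + 1) / m)).
assert (Hp : 0 < (m + 1) / m) by (apply Rdiv_lt_0_compat; lra).
specialize (H Hp). unfold Rdiv in H. rewrite ln_mult, ln_Rinv in H by (try apply Rinv_0_lt_compat; lra).
replace ((m + 1) * / m - 1) with (/ m) in H by (field; lra). lra.
Qed.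

Lemma tele m t : 1 <= m -> 0 < t ->
  t * exp (- (1 + t) * ln (m + 1)) <= exp (- t * ln m) - exp (- t * ln (m + 1)).
Proof.
intros Hm Ht.
set (A := exp (- t * ln (m + 1))).
assert (HA : 0 < A) by apply exp_pos.
assert (E1 : exp (- t * ln m) = A * exp (t * (ln (m + 1) - ln m))).
{ unfold A. rewrite <- exp_plus. f_equal. ring. }
assert (E2 : exp (- (1 + t) * ln (m + 1)) = A * / (m + 1)).
{ unfold A. replace (/ (m + 1)) with (exp (- ln (m + 1))) by (rewrite exp_Ropp, exp_ln by lra; reflexivity).
  rewrite <- exp_plus. f_equal. ring. }
rewrite E1, E2.
pose proof (exp_ineq1_le (t * (ln (m + 1) - ln m))).
pose proof (ln_gap m Hm).
assert (t * / (m + 1) <= t * (ln (m + 1) - ln m)) by (apply Rmult_le_compat_l; lra).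
assert (A * (1 + t * / (m + 1)) <= A * exp (t * (ln (m + 1) - ln m))) by (apply Rmult_le_compat_l; lra).
nra.
Qed.

Lemma pseries_conv s : 1 < s -> summable (fun k => exp (- s * ln (INR k + 1))).
Proof.
intro Hs. set (t := s - 1). assert (Ht : 0 < t) by (unfold t; lra).
apply summ_of_bound; [intro; left; apply exp_pos|].
exists (1 + / t). intro N.
assert (H : sum_f_R0 (fun k => exp (- s * ln (INR k + 1))) N <= 1 + / t * (1 - exp (- t * ln (INR N + 1)))).
{ induction N.
  - simpl. replace (0 + 1) with 1 by ring. rewrite ln_1. replace (-s*0) with 0 by ring.
    replace (-t*0) with 0 by ring. rewrite exp_0. lra.
  - rewrite tech5, S_INR.
    assert (Hm : 1 <= INR N + 1) by (pose proof (pos_INR N); lra).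
    pose proof (tele (INR N + 1) t Hm Ht).
    replace (- s) with (- (1 + t)) by (unfold t; ring).
    replace (- s) with (- (1 + t)) in IHN by (unfold t; ring).
    assert (Hi : 0 < / t) by (apply Rinv_0_lt_compat; lra).
    assert (/ t * (t * exp (- (1 + t) * ln (INR N + 1 + 1))) <=
            / t * (exp (- t * ln (INR N + 1)) - exp (- t * ln (INR N + 1 + 1))))
      by (apply Rmult_le_compat_l; lra).
    replace (/ t * (t * exp (- (1 + t) * ln (INR N + 1 + 1)))) with (exp (- (1 + t) * ln (INR N + 1 + 1))) in H0 by (field; lra).
    lra. }
assert (0 < / t) by (apply Rinv_0_lt_compat; lra).
pose proof (exp_pos (- t * ln (INR N + 1))). nra.
Qed.

Lemma harm_div : ~ summable (fun k => exp (- (1) * ln (INR k + 1))).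
Proof.
intro Hs. destruct (bound_of_summ _ (fun n => Rlt_le _ _ (exp_pos _)) Hs) as [C HC].
assert (H : forall N, ln (INR N + 2) <= sum_f_R0 (fun k => exp (- (1) * ln (INR k + 1))) N).
{ induction N.
  - simpl. replace (0 + 1) with 1 by ring. rewrite ln_1. replace (-(1)*0) with 0 by ring.
    rewrite exp_0. pose proof (ln_le_sub1 (0 + 2)). lra.
  - rewrite tech5, S_INR.
    assert (Hm : 1 <= INR N + 2) by (pose proof (pos_INR N); lra).
    pose proof (ln_gap2 (INR N + 2) Hm).
    replace (INR N + 1 + 1) with (INR N + 2) by ring.
    replace (INR N + 1 + 2) with (INR N + 2 + 1) by ring.
    replace (exp (- (1) * ln (INR N + 2))) with (/ (INR N + 2)).
    + lra.
    + replace (- (1) * ln (INR N + 2)) with (- ln (INR N + 2)) by ring.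
      rewrite exp_Ropp, exp_ln by lra. reflexivity. }
destruct (INR_unbounded (exp C)) as [N HN].
specialize (H N). specialize (HC N).
assert (ln (exp C) < ln (INR N + 2)) by (apply ln_increasing; [apply exp_pos | lra]).
rewrite ln_exp in H0. lra.
Qed.

Lemma phi_lt (phi : nat -> nat) : (forall k, (phi k < phi (S k))%nat) ->
  forall i j, (i < j)%nat -> (phi i < phi j)%nat.
Proof.
intros Hphi i j Hij. induction Hij.
- apply Hphi.
- specialize (Hphi m). lia.
Qed.

Lemma phi_le (phi : nat -> nat) : (forall k, (phi k < phi (S k))%nat) ->
  forall i j, (i <= j)%nat -> (phi i <= phi j)%nat.
Proof.
intros Hphi i j Hij. destruct (Nat.eq_dec i j) as [->|Hne]; [lia|].
pose proof (phi_lt phi Hphi i j). lia.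
Qed.

Lemma sum_all_zero (f : nat -> R) m : (forall n, (n <= m)%nat -> f n = 0) -> sum_f_R0 f m = 0.
Proof.
induction m; intro H; simpl.
- apply H. lia.
- rewrite IHm by (intros; apply H; lia). rewrite H by lia. ring.
Qed.

Lemma sum_gap (f : nat -> R) a b : (a <= b)%nat -> (forall n, (a < n <= b)%nat -> f n = 0) ->
  sum_f_R0 f b = sum_f_R0 f a.
Proof.
intro Hab. induction Hab; intro H; [reflexivity|].
simpl. rewrite IHHab by (intros; apply H; lia). rewrite H by lia. ring.
Qed.

Lemma sum_reindex (phi : nat -> nat) (f : nat -> R) : (forall k, (phi k < phi (S k))%nat) ->
  (forall n, (forall k, phi k <> n) -> f n = 0) ->
  forall K, sum_f_R0 f (phi K) = sum_f_R0 (fun k => f (phi k)) K.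
Proof.
intros Hphi Hf. induction K.
- simpl sum_f_R0 at 2. destruct (phi 0%nat) as [|m] eqn:E.
  + reflexivity.
  + simpl. rewrite sum_all_zero.
    * ring.
    * intros n Hn. apply Hf. intros k Hk. pose proof (phi_le phi Hphi 0 k ltac:(lia)). lia.
- simpl. destruct (phi (S K)) as [|m] eqn:E.
  + specialize (Hphi K). lia.
  + simpl. rewrite <- IHK, <- E. f_equal.
    apply sum_gap.
    * specialize (Hphi K). lia.
    * intros n Hn. apply Hf. intros j Hj.
      destruct (Nat.le_gt_cases j K) as [Hjk|Hjk].
      { pose proof (phi_le phi Hphi j K Hjk). lia. }
      { pose proof (phi_le phi Hphi (S K) j Hjk). lia. }
Qed.

Lemma phi_ge (phi : nat -> nat) : (forall k, (phi k < phi (S k))%nat) -> forall k, (k <= phi k)%nat.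
Proof. intros Hphi k; induction k; [lia|]. specialize (Hphi k). lia. Qed.

Lemma summ_reindex1 (phi : nat -> nat) (f : nat -> R) : (forall k, (phi k < phi (S k))%nat) ->
  (forall n, 0 <= f n) -> (forall n, (forall k, phi k <> n) -> f n = 0) ->
  summable (fun k => f (phi k)) -> summable f.
Proof.
intros Hphi Hpos Hf Hs. destruct (bound_of_summ _ (fun k => Hpos (phi k)) Hs) as [C HC].
apply summ_of_bound; auto. exists C. intro N.
apply Rle_trans with (sum_f_R0 f (phi N)).
- apply tech9; [apply sum_growing; auto | apply phi_ge; auto].
- rewrite (sum_reindex phi f Hphi Hf). apply HC.
Qed.

Lemma summ_reindex2 (phi : nat -> nat) (f : nat -> R) : (forall k, (phi k < phi (S k))%nat) ->
  (forall n, 0 <= f n) -> (forall n, (forall k, phi k <> n) -> f n = 0) ->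
  summable f -> summable (fun k => f (phi k)).
Proof.
intros Hphi Hpos Hf Hs. destruct (bound_of_summ _ Hpos Hs) as [C HC].
apply summ_of_bound; [intro; apply Hpos|]. exists C. intro N.
rewrite <- (sum_reindex phi f Hphi Hf). apply HC.
Qed.

Definition finv (phi : nat -> nat) (n : nat) : option {k | phi k = n} :=
  match excluded_middle_informative (exists k, phi k = n) with
  | left H => Some (constructive_indefinite_description _ H)
  | right _ => None
  end.

Definition cw (p : R) (k : nat) : R := exp (- (1 / p) * ln (INR k + 1)).

Definition G {K} (kp : KP K) (X : NormedSpace K) (Xs : nat -> NormedSpace K) (phi : nat -> nat)
  (p : R) (T : forall k, vc X -> vc (Xs (phi k))) (n : nat) (x : vc X) : vc (Xs n) :=
  match finv phi n with
  | Some (exist k e) =>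
      eq_rect (phi k) (fun m => vc (Xs m)) (vscal (kp_emb kp (cw p k)) (T k x)) n e
  | None => v0 (Xs n)
  end.

Definition dw (phi : nat -> nat) (p : R) (n : nat) : R :=
  match finv phi n with
  | Some (exist k _) => cw p k
  | None => 0
  end.

Lemma cw_pos p k : 0 < cw p k.
Proof. apply exp_pos. Qed.

Lemma cw0 p : cw p 0 = 1.
Proof. unfold cw. simpl. replace (0 + 1) with 1 by ring. rewrite ln_1. replace (- (1 / p) * 0) with 0 by ring. apply exp_0. Qed.

Lemma dw_nonneg phi p n : 0 <= dw phi p n.
Proof. unfold dw. destruct (finv phi n) as [[k e]|]; [left; apply cw_pos | lra]. Qed.

Lemma phi_inj (phi : nat -> nat) : (forall k, (phi k < phi (S k))%nat) ->
  forall i j, phi i = phi j -> i = j.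
Proof.
intros Hphi i j H. destruct (Nat.lt_total i j) as [H1|[H1|H1]]; auto.
- pose proof (phi_lt phi Hphi i j H1). lia.
- pose proof (phi_lt phi Hphi j i H1). lia.
Qed.

Lemma dw_phi phi p : (forall k, (phi k < phi (S k))%nat) -> forall k, dw phi p (phi k) = cw p k.
Proof.
intros Hphi k. unfold dw. unfold finv.
destruct (excluded_middle_informative (exists j, phi j = phi k)) as [H|H].
- destruct (constructive_indefinite_description _ H) as [j e]. f_equal. apply (phi_inj phi Hphi _ _ e).
- exfalso. apply H. exists k. reflexivity.
Qed.

Lemma dw_off phi p n : (forall k, phi k <> n) -> dw phi p n = 0.
Proof.
intro H. unfold dw, finv.
destruct (excluded_middle_informative (exists j, phi j = n)) as [H1|H1]; [|reflexivity].
exfalso. destruct H1 as [j e]. exact (H j e).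
Qed.

Lemma G_add {K} (kp : KP K) X Xs phi p T :
  (forall k, linear_map (T k)) ->
  forall n x y, G kp X Xs phi p T n (vadd x y) = vadd (G kp X Xs phi p T n x) (G kp X Xs phi p T n y).
Proof.
intros HT n x y. unfold G. destruct (finv phi n) as [[k e]|].
- destruct e. simpl. destruct (HT k) as [Ha _]. rewrite Ha, ns_scal_distr_v. reflexivity.
- rewrite ns_add_0. reflexivity.
Qed.

Lemma G_scal {K} (kp : KP K) X Xs phi p T :
  (forall k, linear_map (T k)) ->
  forall n a x, G kp X Xs phi p T n (vscal a x) = vscal a (G kp X Xs phi p T n x).
Proof.
intros HT n a x. unfold G. destruct (finv phi n) as [[k e]|].
- destruct e. simpl. destruct (HT k) as [_ Hs]. rewrite Hs, !ns_scal_assoc, (kp_comm kp). reflexivity.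
- rewrite v_scalv0. reflexivity.
Qed.

Lemma G_zero {K} (kp : KP K) X Xs phi p T :
  (forall k, linear_map (T k)) -> forall n, G kp X Xs phi p T n (v0 X) = v0 (Xs n).
Proof.
intros HT n. rewrite <- (v_scal0 kp X (v0 X)), (G_scal kp X Xs phi p T HT), (v_scal0 kp). reflexivity.
Qed.

Lemma G_sub {K} (kp : KP K) X Xs phi p T :
  (forall k, linear_map (T k)) ->
  forall n x y, G kp X Xs phi p T n (vsub x y) = vsub (G kp X Xs phi p T n x) (G kp X Xs phi p T n y).
Proof.
intros HT n x y. unfold vsub. rewrite (G_add kp X Xs phi p T HT), (v_opp_scal kp X y),
  (G_scal kp X Xs phi p T HT), <- (v_opp_scal kp). reflexivity.
Qed.

Lemma G_bounds {K} (kp : KP K) X Xs phi p T delta :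
  0 < delta ->
  (forall k x, nnorm (T k x) <= delta * nnorm x /\ nnorm x <= delta * nnorm (T k x)) ->
  forall n x, nnorm (G kp X Xs phi p T n x) <= delta * dw phi p n * nnorm x /\
              dw phi p n * nnorm x <= delta * nnorm (G kp X Xs phi p T n x).
Proof.
intros Hd HT n x. unfold G, dw. destruct (finv phi n) as [[k e]|].
- destruct e. simpl. rewrite ns_norm_scal, (kp_emb_abs kp).
  pose proof (cw_pos p k). rewrite Rabs_pos_eq by lra.
  destruct (HT k x) as [H1 H2]. pose proof (ns_norm_nonneg x). pose proof (ns_norm_nonneg (T k x)).
  split; nra.
- rewrite (v_norm0 kp). pose proof (ns_norm_nonneg x). split; nra.
Qed.

Lemma rpow_nonneg a q : 0 <= rpow a q.
Proof. unfold rpow. destruct (Rle_dec a 0); [lra | left; apply exp_pos]. Qed.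

Lemma rpow_0 q : rpow 0 q = 0.
Proof. unfold rpow. destruct (Rle_dec 0 0); [reflexivity | lra]. Qed.

Lemma rpow_pos a q : 0 < a -> rpow a q = Rpower a q.
Proof. intro H. unfold rpow. destruct (Rle_dec a 0); [lra | reflexivity]. Qed.

Lemma rpow_mul_le a b M q : 0 <= q -> 0 <= a -> 0 <= b -> 0 <= M -> a <= M * b ->
  rpow a q <= rpow M q * rpow b q.
Proof.
intros Hq Ha Hb HM Hab.
destruct (Rle_dec a 0) as [Ha0|Ha0].
- replace (rpow a q) with 0 by (unfold rpow; destruct (Rle_dec a 0); [reflexivity|lra]).
  pose proof (rpow_nonneg M q). pose proof (rpow_nonneg b q). nra.
- assert (HM0 : 0 < M) by (destruct (Rle_dec M 0); nra).
  assert (Hb0 : 0 < b) by (destruct (Rle_dec b 0); nra).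
  rewrite !rpow_pos by lra. rewrite Rpower_mult_distr by lra.
  apply Rle_Rpower_l; lra.
Qed.

Lemma rpow_lt a e q : 0 < q -> 0 <= a -> 0 < e -> rpow a q < Rpower e q -> a < e.
Proof.
intros Hq Ha He H. destruct (Rlt_le_dec a e) as [Hl|Hl]; [exact Hl|].
rewrite rpow_pos in H by lra. assert (Rpower e q <= Rpower a q) by (apply Rle_Rpower_l; lra). lra.
Qed.

Lemma rpow_cw p q k : 0 < p -> rpow (cw p k) q = exp (- (q / p) * ln (INR k + 1)).
Proof.
intro Hp. rewrite rpow_pos by apply cw_pos. unfold Rpower, cw. rewrite ln_exp. f_equal. field. lra.
Qed.

Lemma summ_ext (f g : nat -> R) : (forall n, f n = g n) -> summable f -> summable g.
Proof. intros H Hs. replace g with f; [exact Hs|]. apply functional_extensionality. exact H. Qed.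

Lemma small_zero a : 0 <= a -> (forall eps, eps > 0 -> a < eps) -> a = 0.
Proof.
intros Ha H. destruct (Rle_lt_or_eq_dec 0 a Ha) as [Hl|He]; [|auto].
specialize (H (a/2) ltac:(lra)). lra.
Qed.

Lemma dw_summable phi p q : (forall k, (phi k < phi (S k))%nat) -> 0 < p -> p < q ->
  summable (fun n => rpow (dw phi p n) q).
Proof.
intros Hphi Hp Hq. apply (summ_reindex1 phi).
- exact Hphi.
- intro; apply rpow_nonneg.
- intros n Hn. rewrite (dw_off phi p n Hn). apply rpow_0.
- apply summ_ext with (fun k => exp (- (q / p) * ln (INR k + 1))).
  + intro k. rewrite (dw_phi phi p Hphi), rpow_cw by lra. reflexivity.
  + apply pseries_conv. apply (Rmult_lt_reg_r p); [lra|]. field_simplify; lra.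
Qed.

Lemma dw_not_summable phi p : (forall k, (phi k < phi (S k))%nat) -> 0 < p ->
  ~ summable (fun n => rpow (dw phi p n) p).
Proof.
intros Hphi Hp Hs. apply harm_div.
apply summ_ext with (fun k => rpow (dw phi p (phi k)) p).
- intro k. rewrite (dw_phi phi p Hphi), rpow_cw by lra. f_equal. f_equal. field. lra.
- apply (summ_reindex2 phi (fun n => rpow (dw phi p n) p)); auto.
  + intro; apply rpow_nonneg.
  + intros n Hn. rewrite (dw_off phi p n Hn). apply rpow_0.
Qed.

Theorem theorem3p4
  (K : Scalars) (HK : K = RK \/ K = CK)
  (p : R) (Hp : 1 <= p)
  (X : NormedSpace K) (HXc : complete X) (HXinf : infinite_dim X)
  (Xs : nat -> NormedSpace K) (HXsc : forall n, complete (Xs n))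
  (Hsub : exists phi : nat -> nat, (forall k, (phi k < phi (S k))%nat) /\
            contains_isomorphs_uniformly X (fun k => Xs (phi k))) :
  exists W : vc (seqVS Xs) -> Prop,
    closed_subspace_lp_plus Xs p W /\
    (forall w, W w -> (forall n, w n = v0 (Xs n)) \/
                      (in_lp_plus Xs p w /\ ~ in_lq Xs p w)) /\
    exists (BX : vc X -> Prop) (BW : vc (seqVS Xs) -> Prop),
      hamel_basis_of X (fun _ => True) BX /\
      hamel_basis_of (seqVS Xs) W BW /\
      exists f : {x : vc X | BX x} -> {w : vc (seqVS Xs) | BW w}, bijective_map f.
Proof.
destruct (KP_of K HK) as [kp].
destruct Hsub as [phi [Hphi [delta [Hd HT]]]].
assert (Hp0 : 0 < p) by lra.
pose (T := fun k => proj1_sig (constructive_indefinite_description _ (HT k))).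
assert (HTl : forall k, linear_map (T k)).
{ intro k. exact (proj1 (proj2_sig (constructive_indefinite_description _ (HT k)))). }
assert (HTb : forall k x, nnorm (T k x) <= delta * nnorm x /\ nnorm x <= delta * nnorm (T k x)).
{ intro k. exact (proj2 (proj2_sig (constructive_indefinite_description _ (HT k)))). }
clearbody T.
pose (Gn := G kp X Xs phi p T).
pose (wmap := fun (x : vc X) => (fun n => Gn n x) : vc (seqVS Xs)).
assert (Gadd := G_add kp X Xs phi p T HTl).
assert (Gscal := G_scal kp X Xs phi p T HTl).
assert (Gzero := G_zero kp X Xs phi p T HTl).
assert (Gsub := G_sub kp X Xs phi p T HTl).
assert (Gb := G_bounds kp X Xs phi p T delta Hd HTb).
fold Gn in Gadd, Gscal, Gzero, Gsub, Gb.
assert (dw0 : dw phi p (phi 0%nat) = 1) by (rewrite (dw_phi phi p Hphi); apply cw0).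
assert (Hinj0 : forall z, nnorm z <= delta * nnorm (Gn (phi 0%nat) z)).
{ intro z. destruct (Gb (phi 0%nat) z) as [_ H]. rewrite dw0 in H. lra. }
assert (wmap_add : forall x y, wmap (vadd x y) = vadd (wmap x) (wmap y)).
{ intros x y. apply functional_extensionality_dep. intro n. apply Gadd. }
assert (wmap_scal : forall a x, wmap (vscal a x) = vscal a (wmap x)).
{ intros a x. apply functional_extensionality_dep. intro n. apply Gscal. }
assert (wmap_zero : wmap (v0 X) = v0 (seqVS Xs)).
{ apply functional_extensionality_dep. intro n. apply Gzero. }
assert (wmap_inj : forall x y, wmap x = wmap y -> x = y).
{ intros x y H. apply v_sub_eq0. apply ns_norm_zero.
  assert (E : Gn (phi 0%nat) (vsub x y) = v0 _).
  { rewrite Gsub. change (vsub (wmap x (phi 0%nat)) (wmap y (phi 0%nat)) = v0 (Xs (phi 0%nat))).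
    rewrite H. unfold vsub. apply ns_add_opp. }
  pose proof (Hinj0 (vsub x y)). rewrite E, (v_norm0 kp) in H0.
  pose proof (ns_norm_nonneg (vsub x y)). lra. }
assert (w_lq : forall x q, p < q -> in_lq Xs q (wmap x)).
{ intros x q Hq. unfold in_lq.
  apply (summ_comp _ (fun n => rpow (dw phi p n) q) (rpow (delta * nnorm x) q)).
  - intro; apply rpow_nonneg.
  - intro; apply rpow_nonneg.
  - apply rpow_nonneg.
  - intro n. apply rpow_mul_le; try lra.
    + apply ns_norm_nonneg.
    + apply dw_nonneg.
    + pose proof (ns_norm_nonneg x). nra.
    + destruct (Gb n x) as [H _]. change (wmap x n) with (Gn n x). replace (delta * nnorm x * dw phi p n) with (delta * dw phi p n * nnorm x) by ring. exact H.
  - apply dw_summable; auto. }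
pose (W := fun w : vc (seqVS Xs) => exists x, w = wmap x).
exists W. split; [|split].
-
  split; [|split; [|split; [|split]]].
  + intros w [x ->] q Hq. apply w_lq. exact Hq.
  + exists (v0 X). symmetry. exact wmap_zero.
  + intros w1 w2 [x1 ->] [x2 ->]. exists (vadd x1 x2). symmetry. apply wmap_add.
  + intros a w [x ->]. exists (vscal a x). symmetry. apply wmap_scal.
  + intros u y Hu Hy Hconv.
    pose (xs := fun k => proj1_sig (constructive_indefinite_description _ (Hu k))).
    assert (Hxs : forall k, u k = wmap (xs k)).
    { intro k. exact (proj2_sig (constructive_indefinite_description _ (Hu k))). }
    clearbody xs.
    assert (Hq : p < p + 1) by lra.
    assert (coord : forall n e, e > 0 -> exists N, forall k, (k >= N)%nat ->
               nnorm (vsub (u k n) (y n)) < e).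
    { intros n e He.
      assert (Hpe : Rpower e (p + 1) > 0) by apply exp_pos.
      destruct (Hconv (p + 1) Hq _ Hpe) as [N HN]. exists N. intros k Hk.
      destruct (HN k Hk) as [s [Hs1 Hs2]].
      apply (rpow_lt _ _ (p + 1)); try lra; [apply ns_norm_nonneg|].
      pose proof (term_le_sum _ s (fun m => rpow_nonneg _ _) Hs1 n). simpl in H. lra. }
    assert (Hux : forall k n, u k n = Gn n (xs k)).
    { intros k n. rewrite Hxs. reflexivity. }
    destruct (HXc xs) as [xl Hxl].
    { intros eps Heps.
      destruct (coord (phi 0%nat) (eps / (2 * delta))) as [N HN].
      { apply Rdiv_lt_0_compat; lra. }
      exists N. intros a b Ha Hb.
      pose proof (Hinj0 (vsub (xs a) (xs b))) as H1. rewrite Gsub, <- !Hux in H1.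
      pose proof (v_sub_tri _ (u a (phi 0%nat)) (y (phi 0%nat)) (u b (phi 0%nat))) as H2.
      rewrite (v_sub_sym kp _ (y (phi 0%nat))) in H2.
      pose proof (HN a Ha). pose proof (HN b Hb).
      assert (delta * (eps / (2 * delta)) = eps / 2) by (field; lra).
      nra. }
    exists xl. apply functional_extensionality_dep. intro n.
    apply v_sub_eq0. apply ns_norm_zero. apply small_zero; [apply ns_norm_nonneg|].
    intros eps Heps.
    destruct (coord n (eps / 2)) as [N1 HN1]; [lra|].
    set (D := delta * dw phi p n + 1).
    assert (HD : 0 < D) by (unfold D; pose proof (dw_nonneg phi p n); nra).
    destruct (Hxl (eps / (2 * D))) as [N2 HN2]; [apply Rdiv_lt_0_compat; lra|].
    set (k := Nat.max N1 N2).
    specialize (HN1 k ltac:(lia)). specialize (HN2 k ltac:(lia)).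
    pose proof (v_sub_tri _ (y n) (u k n) (Gn n xl)) as H1.
    rewrite (v_sub_sym kp _ (y n) (u k n)) in H1.
    destruct (Gb n (vsub (xs k) xl)) as [H2 _].
    rewrite Gsub, <- Hux in H2.
    assert (H3 : delta * dw phi p n * nnorm (vsub (xs k) xl) <= D * nnorm (vsub (xs k) xl)).
    { pose proof (ns_norm_nonneg (vsub (xs k) xl)). unfold D. nra. }
    assert (H4 : D * nnorm (vsub (xs k) xl) < D * (eps / (2 * D))) by (apply Rmult_lt_compat_l; lra).
    assert (D * (eps / (2 * D)) = eps / 2) by (field; lra).
    change (wmap xl n) with (Gn n xl). lra.
-
  intros w [x ->].
  destruct (classic (x = v0 X)) as [Hx|Hx].
  + left. intro n. subst x. apply Gzero.
  + right. split.
    * intros q Hq. apply w_lq. exact Hq.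
    * intro Hs. unfold in_lq in Hs.
      assert (Hnx : 0 < nnorm x).
      { destruct (ns_norm_nonneg x) as [H|H]; [exact H|]. exfalso. apply Hx. apply ns_norm_zero. auto. }
      apply (dw_not_summable phi p Hphi Hp0).
      apply (summ_comp _ (fun n => rpow (nnorm (wmap x n)) p) (rpow (delta / nnorm x) p)).
      { intro; apply rpow_nonneg. }
      { intro; apply rpow_nonneg. }
      { apply rpow_nonneg. }
      { intro n. apply rpow_mul_le; try lra.
        - apply dw_nonneg.
        - apply ns_norm_nonneg.
        - apply Rlt_le. apply Rdiv_lt_0_compat; lra.
        - destruct (Gb n x) as [_ H]. change (wmap x n) with (Gn n x).
          apply (Rmult_le_reg_r (nnorm x)); [exact Hnx|].
          replace (delta / nnorm x * nnorm (Gn n x) * nnorm x) with (delta * nnorm (Gn n x)) by (field; lra).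
          exact H. }
      exact Hs.
-
  destruct (hamel_exists kp X) as [BX HBX].
  pose (BW := fun w : vc (seqVS Xs) => exists x, BX x /\ w = wmap x).
  exists BX, BW. split; [exact HBX|].
  pose (Fm := fun ax : sc K * vc X => (fst ax, wmap (snd ax))).
  assert (lc_map : forall l, lincomb (map Fm l) = wmap (lincomb l)).
  { induction l as [|[a x] t IH].
    - symmetry. exact wmap_zero.
    - change (vadd (vscal a (wmap x)) (lincomb (map Fm t)) = wmap (vadd (vscal a x) (lincomb t))).
      rewrite IH, wmap_add, wmap_scal. reflexivity. }
  assert (lift : forall l : list (sc K * vc (seqVS Xs)), Forall (fun ax => BW (snd ax)) l ->
            exists l', l = map Fm l' /\ Forall (fun ax => BX (snd ax)) l').
  { induction l as [|[a w] t IH]; intro H.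
    - exists nil. split; [reflexivity | constructor].
    - inversion H as [|? ? [x [Hx Hw]] Ht]; subst.
      destruct (IH Ht) as [l' [Hl' Hf']].
      exists ((a, x) :: l'). split; [simpl in Hw; rewrite Hl', Hw; reflexivity|].
      constructor; assumption. }
  destruct HBX as [_ [HBXi HBXs]].
  split; [split; [|split]|].
  + intros w [x [_ ->]]. exists x. reflexivity.
  + intros l Hnd Hf H0. destruct (lift l Hf) as [l' [-> Hf']].
    rewrite lc_map in H0. rewrite <- wmap_zero in H0. apply wmap_inj in H0.
    assert (Hnd' : NoDup (map snd l')).
    { rewrite map_map in Hnd. simpl in Hnd.
      apply (NoDup_map_inv wmap). rewrite map_map. exact Hnd. }
    pose proof (HBXi l' Hnd' Hf' H0) as Hz.
    apply Forall_map. eapply Forall_impl; [|exact Hz]. intros [a x]. simpl. auto.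
  + intros w [x ->]. destruct (HBXs x I) as [l' [Hf' ->]].
    exists (map Fm l'). split.
    * apply Forall_map. eapply Forall_impl; [|exact Hf']. intros [a x] Hx. simpl in *.
      exists x. split; [exact Hx | reflexivity].
    * symmetry. apply lc_map.
  + unshelve eexists.
    { intros [x Hx]. exists (wmap x). exists x. split; [exact Hx | reflexivity]. }
    split.
    * intros [x1 H1] [x2 H2] Heq. simpl in Heq.
      assert (E : wmap x1 = wmap x2) by (apply (f_equal (@proj1_sig _ _)) in Heq; exact Heq).
      apply wmap_inj in E. subst x2. f_equal; try apply proof_irrelevance.
    * intros [w Hw]. destruct Hw as [x [Hx Hwx]] eqn:Ew. exists (exist _ x Hx).
      simpl. subst w. f_equal; try apply proof_irrelevance.
Qed.
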